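(* Let $t_{11},t_{14},t_{21},t_{22},t_{32}\in\mathbb{C}$ be constants and let $\varepsilon:L\to\bar L$ be defined by $\langle\varepsilon(x),y\rangle=\tilde\varepsilon(x,y)$, where $$\tilde\varepsilon=t_{32}\,\bar T^*\wedge\bar W^*-t_{11}\,\bar T^*\wedge\omega^*-t_{21}\,\bar T^*\wedge\rho^*-t_{22}\,\bar W^*\wedge\rho^*+t_{14}\,\omega^*\wedge\rho^*,$$ and suppose $\varepsilon$ is small enough that $L_\varepsilon=\{x+\varepsilon(x):x\in L\}$ satisfies $L_\varepsilon\cap\bar L_\varepsilon=0$ (so that $L_\varepsilon$ is a generalized complex structure). Then the type of $L_\varepsilon$ is constant on $N$ and equals $0$ (symplectic type) if $t_{14}\neq0$, and $2$ (complex type) if $t_{14}=0$.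
   Context: Let $N$ be a primary Kodaira surface (real dimension 4). As a real manifold $N$ is parallelizable: there are global real vector fields $X,Y,U,V$ forming a frame of $T_N$ whose only nonzero Lie bracket is $[X,Y]=U$, with standard complex structure $JX=Y$, $JY=-X$, $JU=V$, $JV=-U$. Put $T=\frac12(X-iY)$, $W=\frac12(U-iV)$; then $\{T,W,\bar T,\bar W\}$ is a global frame of $T_N\otimes\mathbb{C}$ whose only nonzero bracket is $[T,\bar T]=\frac i2(W+\bar W)$, and $\{\omega,\rho,\bar\omega,\bar\rho\}$ is the dual coframe. On $(T_N\oplus T_N^* )\otimes\mathbb{C}$ use the inner product $\langle X+\sigma,Y+\tau\rangle=\frac12(\sigma(Y)+\tau(X))$ and the Courant bracket $[X+\sigma,Y+\tau]=[X,Y]+\mathcal L_X\tau-\mathcal L_Y\sigma-\frac12 d(i_X\tau-i_Y\sigma)$. A generalized complex structure is a maximal isotropic, Courant-involutive subbundle $E\subset(T_N\oplus T_N^* )\otimes\mathbb{C}$ with $E\cap\bar E=0$; its type at $p\in N$ is the complex codimension of $\pi_T(E_p)$ in $T_pN\otimes\mathbb{C}$, where $\pi_T$ is the projection to the tangent part. $L$ is the subbundle spanned by $\bar T,\bar W,\omega,\rho$, $\bar L$ the one spanned by $T,W,\bar\omega,\bar\rho$, and $\{\bar T^*,\bar W^*,\omega^*,\rho^*\}$ is the frame of $L^*$ dual to $\{\bar T,\bar W,\omega,\rho\}$. Wedge products are evaluated as $(\alpha\wedge\beta)(x,y)=\alpha(x)\beta(y)-\alpha(y)\beta(x)$. (For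 these $\tilde\varepsilon$ the Maurer–Cartan equation holds, so $L_\varepsilon$ is Courant involutive.) *)

(* Defs.v *)
(* Fiberwise model of (T_N ⊕ T_N^* ) ⊗ C in the global frame. *)
From HB Require Import structures.
From mathcomp Require Import all_boot all_order all_algebra.
Set Implicit Arguments. Unset Strict Implicit. Unset Printing Implicit Defensive.
Import Order.TTheory GRing.Theory Num.Theory.
Local Open Scope ring_scope.

(* Coordinates of a vector v : 'rV[C]_8 of (T ⊕ T^* ) ⊗ C, in the global frame
   index 0 : T, 1 : W, 2 : Tbar, 3 : Wbar   (tangent part)
   index 4 : ω, 5 : ρ, 6 : ωbar, 7 : ρbar   (cotangent part, dual coframe:
   index 4+k is dual to index k). *)
Definition ix (k : nat) : 'I_8 := inord k.

Section Fiber.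
Variable C : numClosedFieldType.

(* L = span(Tbar, Wbar, ω, ρ) : rows are the frame vectors e_2, e_3, e_4, e_5 *)
Definition Lmx : 'M[C]_(4, 8) :=
  \matrix_(i < 4, j < 8) ((j : nat) == (i + 2)%N)%:R.

(* Lbar = span(T, W, ωbar, ρbar) : rows e_0, e_1, e_6, e_7 *)
Definition Lbarmx : 'M[C]_(4, 8) :=
  \matrix_(i < 4, j < 8) ((j : nat) == nth 0%N [:: 0; 1; 6; 7]%N i)%:R.

(* <X + σ, Y + τ> = 1/2 (σ(Y) + τ(X)), complex bilinear *)
Definition pairing (u v : 'rV[C]_8) : C :=
  2^-1 * \sum_(k < 4) (u 0 (ix (4 + k)) * v 0 (ix k) + v 0 (ix (4 + k)) * u 0 (ix k)).

(* frame of L^* dual to (Tbar, Wbar, ω, ρ), evaluated on elements of L *)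
Definition Tbs (x : 'rV[C]_8) : C := x 0 (ix 2).
Definition Wbs (x : 'rV[C]_8) : C := x 0 (ix 3).
Definition oms (x : 'rV[C]_8) : C := x 0 (ix 4).
Definition rhs (x : 'rV[C]_8) : C := x 0 (ix 5).

Definition wedge (a b : 'rV[C]_8 -> C) (x y : 'rV[C]_8) : C :=
  a x * b y - a y * b x.

Definition eps_tilde (t11 t14 t21 t22 t32 : C) (x y : 'rV[C]_8) : C :=
  t32 * wedge Tbs Wbs x y - t11 * wedge Tbs oms x y - t21 * wedge Tbs rhs x y
  - t22 * wedge Wbs rhs x y + t14 * wedge oms rhs x y.

(* complex conjugation of (T ⊕ T^* ) ⊗ C in the frame:
   conj(T)=Tbar, conj(W)=Wbar, conj(ω)=ωbar, conj(ρ)=ρbar *)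
Definition sw (j : 'I_8) : 'I_8 :=
  ix (if (j < 4)%N then ((j + 2) %% 4)%N else (4 + (j + 2) %% 4)%N).

(* rows of conj_mx A span the complex conjugate of the row space of A *)
Definition conj_mx m (A : 'M[C]_(m, 8)) : 'M[C]_(m, 8) :=
  \matrix_(i < m, j < 8) (A i (sw j))^*.

Definition piT : 'M[C]_(8, 4) := \matrix_(i < 8, j < 4) ((i : nat) == j)%:R.

(* type of the subspace spanned by the rows of A: complex codimension of
   π_T(row space of A) in T ⊗ C (complex dimension 4) *)
Definition gc_type m (A : 'M[C]_(m, 8)) : nat := (4 - \rank (A *m piT))%N.

End Fiber.

(* Main.v *)
Require Import Defs.
From HB Require Import structures.
From mathcomp Require Import all_boot all_order all_algebra.
Import Order.TTheory GRing.Theory Num.Theory.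
Local Open Scope ring_scope.
Section S.
Variable C : numClosedFieldType.
Variable E : 'M[C]_8.
Lemma ixK k : (k < 8)%N -> (ix k : nat) = k.
Proof. by move=> h; rewrite /ix inordK. Qed.
Lemma Aent (i : 'I_4) k : (Lmx C *m (1%:M + E)) i k = (1%:M + E) (ix (i+2)) k.
Proof.
have hi : (i + 2 < 8)%N by case: i => [[|[|[|[|]]]]].
rewrite mxE (bigD1 (ix (i+2))) //= big1 ?addr0.
  by rewrite !mxE ixK // eqxx mul1r.
move=> l hl; rewrite !mxE; case: eqP => [e|]; last by rewrite mul0r.
by move: hl; rewrite -e /ix inord_val eqxx.
Qed.
Lemma MT (A : 'M[C]_(4,8)) i (j : 'I_4) : (A *m piT C) i j = A i (widen_ord (isT : (4 <= 8)%N) j).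
Proof.
rewrite mxE (bigD1 (widen_ord (isT : (4 <= 8)%N) j)) //= big1 ?addr0.
  by rewrite !mxE eqxx mulr1.
move=> l hl; rewrite !mxE; case: eqP => [e|]; last by rewrite mulr0.
have el : l = widen_ord (isT : (4 <= 8)%N) j by apply: val_inj.
by move: hl; rewrite el eqxx.
Qed.
Lemma ixE m n : (m < 8)%N -> (n < 8)%N -> (ix m == ix n) = (m == n).
Proof. by move=> hm hn; rewrite -val_eqE /= !ixK. Qed.
Lemma ixP (j : 'I_8) m : (m < 8)%N -> (j == ix m) = ((j : nat) == m).
Proof.
move=> h; apply/eqP/eqP => [->|e]; first exact: ixK.
by apply: val_inj; rewrite /= ixK.
Qed.
Lemma dsub m : (2 <= m < 6)%N -> ((delta_mx 0 (ix m) : 'rV[C]_8) <= Lmx C)%MS.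
Proof.
case/andP=> h1 h2.
have h8 : (m < 8)%N by apply: (leq_trans h2).
have -> : (delta_mx 0 (ix m) : 'rV[C]_8) = row (inord (m-2)) (Lmx C).
  apply/rowP=> j; rewrite !mxE inordK; last by rewrite ltn_subLR.
  by rewrite subnK // eqxx /= ixP.
exact: row_sub.
Qed.
Lemma key (t11 t14 t21 t22 t32 : C) :
  (forall x : 'rV[C]_8, (x <= Lmx C)%MS ->
     (x *m E <= Lbarmx C)%MS /\
     (forall y : 'rV[C]_8, (y <= Lmx C)%MS ->
        pairing (x *m E) y = eps_tilde t11 t14 t21 t22 t32 x y)) ->
  [/\ 2^-1 * E (ix 4) (ix 0) = 0, 2^-1 * E (ix 4) (ix 1) = t14,
      2^-1 * E (ix 5) (ix 0) = - t14 & 2^-1 * E (ix 5) (ix 1) = 0].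
Proof.
move=> H.
have P m n : (2 <= m < 6)%N -> (2 <= n < 6)%N ->
   pairing ((delta_mx 0 (ix m) : 'rV[C]_8) *m E) (delta_mx 0 (ix n)) =
   eps_tilde t11 t14 t21 t22 t32 (delta_mx 0 (ix m)) (delta_mx 0 (ix n)).
  move=> hm hn; exact: ((H _ (dsub m hm)).2 _ (dsub n hn)).
have Q m n hm hn := P m n hm hn.
move: (Q 4%N 4%N isT isT).
rewrite -!rowE /pairing /eps_tilde /wedge /Tbs /Wbs /oms /rhs !big_ord_recl big_ord0 /= !mxE /bump /= !ixE //=.
rewrite ?mul0r ?mulr0 ?mul1r ?mulr1 ?addr0 ?add0r ?subr0 ?sub0r ?mulr0 ?mulrN1 ?mulr1 ?add0n ?addn0 => h1.
move: (Q 4%N 5%N isT isT).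
rewrite -!rowE /pairing /eps_tilde /wedge /Tbs /Wbs /oms /rhs !big_ord_recl big_ord0 /= !mxE /bump /= !ixE //=.
rewrite ?mul0r ?mulr0 ?mul1r ?mulr1 ?addr0 ?add0r ?subr0 ?sub0r ?mulr0 ?mulrN1 ?mulr1 ?add0n ?addn0 => h2.
move: (Q 5%N 4%N isT isT).
rewrite -!rowE /pairing /eps_tilde /wedge /Tbs /Wbs /oms /rhs !big_ord_recl big_ord0 /= !mxE /bump /= !ixE //=.
rewrite ?mul0r ?mulr0 ?mul1r ?mulr1 ?addr0 ?add0r ?subr0 ?sub0r ?mulr0 ?mulrN1 ?mulr1 ?add0n ?addn0 => h3.
move: (Q 5%N 5%N isT isT).
rewrite -!rowE /pairing /eps_tilde /wedge /Tbs /Wbs /oms /rhs !big_ord_recl big_ord0 /= !mxE /bump /= !ixE //=.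
rewrite ?mul0r ?mulr0 ?mul1r ?mulr1 ?addr0 ?add0r ?subr0 ?sub0r ?mulr0 ?mulrN1 ?mulr1 ?add0n ?addn0 => h4.
move: h1 h2 h3 h4; rewrite !oppr0 !mulr0 !subr0 !add0r ?sub0r => -> -> -> ->; by [].
Qed.
Definition mf (a0 a1 b0 b1 c : C) (i j : nat) : C :=
 match i, j with
 | O,O => a0 | O,1%N => a1 | O,2%N => 1 | 1%N,O => b0 | 1%N,1%N => b1 | 1%N,3%N => 1
 | 2%N,1%N => c | 3%N,O => -c | _,_ => 0 end.
Definition mk m n (l : seq (seq C)) : 'M[C]_(m,n) := \matrix_(i,j) nth 0 (nth [::] l i) j.

Lemma rank_gen (M : 'M[C]_4) a0 a1 b0 b1 c :
  (forall i j : 'I_4, M i j = mf a0 a1 b0 b1 c i j) ->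
  \rank M = if c != 0 then 4%N else 2%N.
Proof.
move=> hM.
case: ifP => hc.
  apply/eqP; rewrite eqn_leq rank_leq_row /=.
  pose B := mk 4 4 [:: [:: 0; 0; 0; -1]; [:: 0; 0; 1; 0]; [:: c; 0; -a1; a0]; [:: 0; c; -b1; b0]].
  have e : B *m M = c%:M.
    apply/matrixP => i j; rewrite !mxE !big_ord_recl big_ord0 !hM /= !mxE /bump /=.
    case: i => [[|[|[|[|i]]]] hi] //; case: j => [[|[|[|[|j]]]] hj] //=;
    rewrite ?mul0r ?mulr0 ?mul1r ?mulr1 ?addr0 ?add0r ?mulrN ?mulNr ?mulN1r ?opprK //;
    by rewrite ?mulr1n ?mulr0n ?mul1r // mulrC subrr.
  have h : (4 <= \rank M)%N.
    apply: (mulmx1_min_rank (M:=B) (N:=(c^-1)%:M)).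
    by rewrite e -scalar_mxM mulfV.
  exact: h.
have c0 : c = 0 by apply/eqP; move/negbFE: hc.
pose R := mk 2 4 [:: [:: 1; 0; 0; 0]; [:: 0; 1; 0; 0]].
pose P := mk 4 2 [:: [:: 0; 0]; [:: 0; 0]; [:: 1; 0]; [:: 0; 1]].
pose S := mk 4 2 [:: [:: 1; 0]; [:: 0; 1]; [:: 0; 0]; [:: 0; 0]].
apply/eqP; rewrite eqn_leq; apply/andP; split.
  have -> : M = S *m (R *m M).
    apply/matrixP => i j; rewrite !(mxE, big_ord_recl, big_ord0) !hM /= /bump /= c0.
    case: i => [[|[|[|[|i]]]] hi] //; case: j => [[|[|[|[|j]]]] hj] //=;
    by rewrite ?mul0r ?mulr0 ?mul1r ?mulr1 ?addr0 ?add0r ?oppr0.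
  exact: leq_trans (mxrankM_maxl S _) (rank_leq_col S).
apply: (@mulmx1_min_rank _ 2 4 4 M R P).
apply/matrixP => i j; rewrite !(mxE, big_ord_recl, big_ord0) !hM /= /bump /= c0.
case: i => [[|[|i]] hi] //; case: j => [[|[|j]] hj] //=;
by rewrite ?mul0r ?mulr0 ?mul1r ?mulr1 ?addr0 ?add0r ?oppr0.
Qed.


Lemma half_inj (x y : C) : 2^-1 * x = 2^-1 * y -> x = y.
Proof.
apply: mulfI; rewrite invr_eq0 pnatr_eq0 //.
Qed.
Lemma Lbar0 (v : 'rV[C]_8) n : (v <= Lbarmx C)%MS -> (n == 2)%N || (n == 3)%N -> v 0 (ix n) = 0.
Proof.
move=> /submxP [D ->] hn; rewrite mxE big1 // => k _; rewrite mxE.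
have hn8 : (n < 8)%N by case/orP: hn => /eqP ->.
rewrite ixK //; case: k => [[|[|[|[|k]]]] hk] //=; case/orP: hn => /eqP -> /=; by rewrite mulr0.
Qed.
Lemma Ezero m n : (2 <= m < 6)%N -> (n == 2)%N || (n == 3)%N ->
  (forall x : 'rV[C]_8, (x <= Lmx C)%MS -> (x *m E <= Lbarmx C)%MS) ->
  E (ix m) (ix n) = 0.
Proof.
move=> hm hn H; have := Lbar0 _ n (H _ (dsub m hm)) hn.
by rewrite -rowE mxE.
Qed.
Lemma widen_ix (j : 'I_4) : widen_ord (isT : (4 <= 8)%N) j = ix j.
Proof. apply: val_inj; rewrite /= ixK //; exact: (leq_trans (ltn_ord j)). Qed.
End S.

Theorem proposition4p11 (C : numClosedFieldType) (t11 t14 t21 t22 t32 : C)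
    (E : 'M[C]_8) :
  (forall x : 'rV[C]_8, (x <= Lmx C)%MS ->
     (x *m E <= Lbarmx C)%MS /\
     (forall y : 'rV[C]_8, (y <= Lmx C)%MS ->
        pairing (x *m E) y = eps_tilde t11 t14 t21 t22 t32 x y)) ->
  \rank (Lmx C *m (1%:M + E) :&: conj_mx (Lmx C *m (1%:M + E)))%MS = 0%N ->
  gc_type (Lmx C *m (1%:M + E)) = (if t14 != 0 then 0%N else 2%N).
Proof.
move=> H _.
have [k1 k2 k3 k4] := key C E t11 t14 t21 t22 t32 H.
have e40 : E (ix 4) (ix 0) = 0 by apply: half_inj; rewrite k1 mulr0.
have e51 : E (ix 5) (ix 1) = 0 by apply: half_inj; rewrite k4 mulr0.
have e50 : E (ix 5) (ix 0) = - E (ix 4) (ix 1) by apply: half_inj; rewrite k3 mulrN k2.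
have ec : E (ix 4) (ix 1) = 2 * t14.
  apply: half_inj; rewrite k2 mulrA mulVf ?mul1r // pnatr_eq0 //.
rewrite /gc_type (@rank_gen C _ (E (ix 2) (ix 0)) (E (ix 2) (ix 1)) (E (ix 3) (ix 0)) (E (ix 3) (ix 1)) (E (ix 4) (ix 1))).
  by rewrite ec mulf_eq0 pnatr_eq0 /=; case: (t14 != 0).
move=> i j; rewrite MT Aent widen_ix mxE mxE.
case: i => [[|[|[|[|i]]]] hi] //; case: j => [[|[|[|[|j]]]] hj] //=;
rewrite ?ixE //= ?add0r ?addr0 ?e40 ?e51 ?e50 //;
rewrite Ezero ?addr0 // => x hx; exact: (H x hx).1.
Qed.
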